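(* Let $L$ be a multisorted algebra in the positive existential signature satisfying axioms (0), (1), (2), (3), (4), (8). Then there is a set $W$ and an almost morphism $\varphi\colon L\to A(W)$ into the positive existential algebra of $W$ which is injective on each sort.
   Context: The Boolean prime ideal theorem (equivalently, compactness) is assumed. Signature. There is a sort $n$ for each $n\ge0$. For every function $\alpha\colon\{1,\dots,n\}\to\{1,\dots,k\}$ there is a unary function symbol (''substitution'') $\alpha\colon n\to k$ (argument of sort $n$, value of sort $k$). Each sort has $0,1,\vee,\wedge$; for each $n$ there is $\exists\colon n+1\to n$ (positive existential signature). For $\alpha\colon k\to n$, $\beta\colon n\to m$, $\beta\circ\alpha$ is the substitution symbol of the composite function; $\mathrm{id}$ is the identity substitution. The associated cylindrification of $\exists\colon n+1\to n$ is $c\colon n\to n+1$, $c(i)=i$. For a set $W$: $\alpha^{\mathrm{tuple}}(x_1,\dots,x_k)=(x_{\alpha(1)},\dots,x_{\alpha(n)})$, $\alpha^{\mathrm{relation}}(r)=\{\bar x\in W^k:\alpha^{\mathrm{tuple}}(\bar x)\in r\}$. The positive existential algebra $A(W)$ interprets sort $n$ as $\mathcal P(W^n)$, $\alpha$ as $\alpha^{\mathrm{relation}}$, $0,1,\vee,\wedge$ as $\emptyset,W^n,\cup,\cap$, and $\exists(r)=\{\bar x:\exists y\,(\bar x,y)\in r\}$. An almost morphism $\varphi\colon L\to A(W)$ is a sort-preserving family of maps commuting with all substitutions and with $0,1,\vee,\wedge$, and satisfying $\exists(\varphi(r))\subseteq\varphi(\exists(r))$. Partitioning cylindrifications: for $k_1,\dots,k_m$,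 $n=\sum k_j$, the substitutions $c_i\colon k_i\to n$, $c_i(l)=l+\sum_{j<i}k_j$. $x\le y$ (also $y\ge x$) means $x=x\wedge y$. Axioms: (0) For partitioning cylindrifications $c_1,\dots,c_m$ and $r_i,s_i$ of sort $k_i$: if $\bigvee_i c_i(s_i)\ge\bigwedge_i c_i(r_i)$ then $s_i\ge r_i$ for some $i$ (including $m=0$: $0\ge1$ fails in sort $0$). (1) Each sort is a bounded distributive lattice. (2) Substitutions preserve $0,1,\vee,\wedge$. (3) $(\beta\circ\alpha)(r)=\beta(\alpha(r))$. (4) $\mathrm{id}(r)=r$. (8) $r\le c(\exists(r))$. *)

(* Defs.v *)
From mathcomp Require Import all_boot.
Set Implicit Arguments. Unset Strict Implicit. Unset Printing Implicit Defensive.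

(* Sorts are indexed by n : nat; the set {1,...,n} is rendered as 'I_n
   (0-indexed). *)
Record PEAlg := {
  car : nat -> Type;
  zero : forall n, car n;
  one : forall n, car n;
  join : forall n, car n -> car n -> car n;
  meet : forall n, car n -> car n -> car n;
  subst : forall n k, {ffun 'I_n -> 'I_k} -> car n -> car k;
  ex : forall n, car n.+1 -> car n
}.

Arguments zero {_ _}. Arguments one {_ _}.
Arguments join {_ _}. Arguments meet {_ _}.
Arguments subst {_ _ _}. Arguments ex {_ _}.

Definition le (L : PEAlg) n (x y : car L n) : Prop := x = meet x y.

Definition compf n k m (beta : {ffun 'I_k -> 'I_m}) (alpha : {ffun 'I_n -> 'I_k})
  : {ffun 'I_n -> 'I_m} := [ffun i => beta (alpha i)].
Definition idf n : {ffun 'I_n -> 'I_n} := [ffun i => i].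

Definition cylf n : {ffun 'I_n -> 'I_n.+1} := [ffun i => widen_ord (leqnSn n) i].

(* partitioning cylindrifications c_i : k_i -> n, c_i(l) = l + sum_{j<i} k_j *)
Definition poff m (k : 'I_m -> nat) (i : 'I_m) : nat := \sum_(j < m | j < i) k j.

Lemma pcyl_subproof m (k : 'I_m -> nat) (i : 'I_m) (l : 'I_(k i)) :
  l + poff k i < \sum_(j < m) k j.
Proof.
rewrite /poff [X in _ < X](bigD1 i) //=.
have H : \sum_(j < m | j < i) k j <= \sum_(j < m | j != i) k j.
  rewrite [X in _ <= X](bigID (fun j : 'I_m => j < i)) /=.
  apply: leq_trans (leq_addr _ _).
  rewrite [X in _ <= X](eq_bigl (fun j : 'I_m => j < i)) //.
  move=> j /=; case: (ltnP j i) => Hj; rewrite ?andbT ?andbF //.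
  by apply/eqP => E; rewrite E ltnn in Hj.
by rewrite -addSn; apply: leq_add => //; exact: ltn_ord.
Qed.

Definition pcyl m (k : 'I_m -> nat) (i : 'I_m) : {ffun 'I_(k i) -> 'I_(\sum_(j < m) k j)} :=
  [ffun l => Ordinal (pcyl_subproof l)].

Definition PEaxioms (L : PEAlg) : Prop :=
  (forall m (k : 'I_m -> nat) (r s : forall i : 'I_m, car L (k i)),
      le (\big[@meet L _ / one]_(i < m) subst (pcyl k i) (r i))
         (\big[@join L _ / zero]_(i < m) subst (pcyl k i) (s i)) ->
      exists i : 'I_m, le (r i) (s i))
  /\ (forall n (x y z : car L n),
        [/\ join x (join y z) = join (join x y) z,
            meet x (meet y z) = meet (meet x y) z,
            join x y = join y x,
            meet x y = meet y x &
          [/\ join x (meet x y) = x,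
              meet x (join x y) = x,
              join x zero = x,
              meet x one = x &
              meet x (join y z) = join (meet x y) (meet x z)]])
  /\ (forall n k (alpha : {ffun 'I_n -> 'I_k}) (x y : car L n),
        [/\ subst alpha (@zero L n) = zero,
            subst alpha (@one L n) = one,
            subst alpha (join x y) = join (subst alpha x) (subst alpha y) &
            subst alpha (meet x y) = meet (subst alpha x) (subst alpha y)])
  /\ (forall k n m (alpha : {ffun 'I_k -> 'I_n}) (beta : {ffun 'I_n -> 'I_m}) (r : car L k),
        subst (compf beta alpha) r = subst beta (subst alpha r))
  /\ (forall n (r : car L n), subst (idf n) r = r)
  /\ (forall n (r : car L n.+1), le r (subst (cylf n) (ex r))).

(* The positive existential algebra A(W): sort n is P(W^n); tuples are
   finite functions 'I_n -> W, relations are predicates on them. *)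
Definition tuple_of W n k (alpha : {ffun 'I_n -> 'I_k}) (x : {ffun 'I_k -> W})
  : {ffun 'I_n -> W} := [ffun i => x (alpha i)].

Definition snoc W n (x : {ffun 'I_n -> W}) (y : W) : {ffun 'I_n.+1 -> W} :=
  [ffun i => match unlift ord_max i with Some j => x j | None => y end].

Definition almost_morphism (L : PEAlg) (W : Type)
  (phi : forall n, car L n -> ({ffun 'I_n -> W} -> Prop)) : Prop :=
  (forall n k (alpha : {ffun 'I_n -> 'I_k}) (r : car L n),
      phi k (subst alpha r) = (fun x => phi n r (tuple_of alpha x)))
  /\ (forall n, phi n zero = (fun _ => False))
  /\ (forall n, phi n one = (fun _ => True))
  /\ (forall n (r s : car L n), phi n (join r s) = (fun x => phi n r x \/ phi n s x))
  /\ (forall n (r s : car L n), phi n (meet r s) = (fun x => phi n r x /\ phi n s x))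
  /\ (forall n (r : car L n.+1) (x : {ffun 'I_n -> W}) (y : W),
        phi n.+1 r (snoc x y) -> phi n (ex r) x).

(* Main.v *)
Require Import Defs.
From mathcomp Require Import all_boot.
From Stdlib Require List.
From mathcomp Require Import boolp classical_sets.
Set Implicit Arguments. Unset Strict Implicit. Unset Printing Implicit Defensive.
Notation one := Defs.one (only parsing).
Notation zero := Defs.zero (only parsing).

Section Lat.
Variable L : PEAlg.
Hypothesis HL : PEaxioms L.

Lemma ax0 m (k : 'I_m -> nat) (r s : forall i : 'I_m, car L (k i)) :
      le (\big[@meet L _ / one]_(i < m) subst (pcyl k i) (r i))
         (\big[@join L _ / zero]_(i < m) subst (pcyl k i) (s i)) ->
      exists i : 'I_m, le (r i) (s i).
Proof. by case: HL => H _; apply: H. Qed.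

Section Sort.
Variable n : nat.
Implicit Types x y z : car L n.
Let A1 x y z := let: conj _ (conj H _) := HL in H n x y z.
Lemma joinA x y z : join x (join y z) = join (join x y) z. Proof. by case: (A1 x y z). Qed.
Lemma meetA x y z : meet x (meet y z) = meet (meet x y) z. Proof. by case: (A1 x y z). Qed.
Lemma joinC x y : join x y = join y x. Proof. by case: (A1 x y x). Qed.
Lemma meetC x y : meet x y = meet y x. Proof. by case: (A1 x y x). Qed.
Lemma joinKI x y : join x (meet x y) = x. Proof. by case: (A1 x y x) => _ _ _ _ []. Qed.
Lemma meetKU x y : meet x (join x y) = x. Proof. by case: (A1 x y x) => _ _ _ _ []. Qed.
Lemma join0 x : join x zero = x. Proof. by case: (A1 x x x) => _ _ _ _ []. Qed.
Lemma meet1 x : meet x one = x. Proof. by case: (A1 x x x) => _ _ _ _ []. Qed.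
Lemma meetDl x y z : meet x (join y z) = join (meet x y) (meet x z).
Proof. by case: (A1 x y z) => _ _ _ _ []. Qed.

Lemma meetxx x : meet x x = x.
Proof. by rewrite -{2}(joinKI x x) meetKU. Qed.
Lemma le_refl x : le x x. Proof. by rewrite /le meetxx. Qed.
Lemma le_trans x y z : le x y -> le y z -> le x z.
Proof. rewrite /le => Hxy Hyz; by rewrite Hxy -meetA -Hyz. Qed.
Lemma le_anti x y : le x y -> le y x -> x = y.
Proof. by rewrite /le => H1 H2; rewrite {1}H1 meetC -H2. Qed.
Lemma le_meetl x y : le (meet x y) x.
Proof. by rewrite /le [meet _ x]meetC meetA meetxx. Qed.
Lemma le_meetr x y : le (meet x y) y.
Proof. by rewrite /le -meetA meetxx. Qed.
Lemma le_meet z x y : le z x -> le z y -> le z (meet x y).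
Proof. by rewrite /le => Hx Hy; rewrite meetA -Hx. Qed.
Lemma le_joinl x y : le x (join x y). Proof. by rewrite /le meetKU. Qed.
Lemma le_joinr x y : le y (join x y). Proof. by rewrite joinC; apply: le_joinl. Qed.
Lemma le_join x y z : le x z -> le y z -> le (join x y) z.
Proof.
rewrite /le => Hx Hy; by rewrite meetC meetDl [meet z x]meetC [meet z y]meetC -Hx -Hy.
Qed.
Lemma le_one x : le x one. Proof. by rewrite /le meet1. Qed.
Lemma meet0 x : meet zero x = zero.
Proof. by rewrite -{1}(join0 x) joinC meetKU. Qed.
Lemma le_zero x : le zero x. Proof. by rewrite /le meet0. Qed.
Lemma le_meet2 (x y x' y' : car L n) : le x x' -> le y y' -> le (meet x y) (meet x' y').
Proof.
move=> H1 H2; apply: le_meet; [apply: le_trans H1|apply: le_trans H2];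
  [apply: le_meetl|apply: le_meetr].
Qed.
Lemma le_join2 (x y x' y' : car L n) : le x x' -> le y y' -> le (join x y) (join x' y').
Proof.
move=> H1 H2; apply: le_join; [apply: le_trans H1 _|apply: le_trans H2 _];
  [apply: le_joinl|apply: le_joinr].
Qed.
Lemma le_cut (a l d : car L n) : le (meet a l) d -> le a (join l d) -> le a d.
Proof.
move=> H1 H2; apply: (le_trans (le_meet (le_refl a) H2)).
rewrite meetDl; apply: le_join => //; apply: le_meetr.
Qed.
End Sort.

Let A2 n k (alpha : {ffun 'I_n -> 'I_k}) (x y : car L n) :=
  let: conj _ (conj _ (conj H _)) := HL in H n k alpha x y.
Lemma subst0 n k (a : {ffun 'I_n -> 'I_k}) : subst a (@zero L n) = zero.
Proof. by case: (A2 a zero zero). Qed.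
Lemma subst1 n k (a : {ffun 'I_n -> 'I_k}) : subst a (@one L n) = one.
Proof. by case: (A2 a zero zero). Qed.
Lemma substJ n k (a : {ffun 'I_n -> 'I_k}) (x y : car L n) : subst a (@join L n x y) = join (subst a x) (subst a y).
Proof. by case: (A2 a x y). Qed.
Lemma substM n k (a : {ffun 'I_n -> 'I_k}) (x y : car L n) : subst a (@meet L n x y) = meet (subst a x) (subst a y).
Proof. by case: (A2 a x y). Qed.
Lemma substC k n m (a : {ffun 'I_k -> 'I_n}) (b : {ffun 'I_n -> 'I_m}) (r : car L k) :
  subst (compf b a) r = subst b (subst a r).
Proof. by case: HL => _ [_ [_ [H _]]]; apply: H. Qed.
Lemma substI n (r : car L n) : subst (idf n) r = r.
Proof. by case: HL => _ [_ [_ [_ [H _]]]]; apply: H. Qed.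
Lemma exle n (r : car L n.+1) : le r (subst (cylf n) (ex r)).
Proof. by case: HL => _ [_ [_ [_ [_ H]]]]; apply: H. Qed.
Lemma subst_le n k (a : {ffun 'I_n -> 'I_k}) (x y : car L n) : le x y -> le (subst a x) (subst a y).
Proof. by rewrite /le => E; rewrite -substM -E. Qed.

Lemma bigM_lb T n (F : T -> car L n) (G : seq T) g : List.In g G ->
  le (\big[@meet L n/one]_(x <- G) F x) (F g).
Proof.
elim: G => //= a G IH [->|H]; rewrite big_cons; first exact: le_meetl.
exact: le_trans (le_meetr _ _) (IH H).
Qed.
Lemma bigM_glb T n (F : T -> car L n) (G : seq T) z :
  (forall g, List.In g G -> le z (F g)) -> le z (\big[@meet L n/one]_(x <- G) F x).
Proof.
elim: G => [|a G IH] H; first by rewrite big_nil; apply: le_one.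
rewrite big_cons; apply: le_meet; first by apply: H; left.
by apply: IH => g Hg; apply: H; right.
Qed.
Lemma bigJ_ub T n (F : T -> car L n) (G : seq T) g : List.In g G ->
  le (F g) (\big[@join L n/zero]_(x <- G) F x).
Proof.
elim: G => //= a G IH [->|H]; rewrite big_cons; first exact: le_joinl.
exact: le_trans (IH H) (le_joinr _ _).
Qed.
Lemma bigJ_lub T n (F : T -> car L n) (G : seq T) z :
  (forall g, List.In g G -> le (F g) z) -> le (\big[@join L n/zero]_(x <- G) F x) z.
Proof.
elim: G => [|a G IH] H; first by rewrite big_nil; apply: le_zero.
rewrite big_cons; apply: le_join; first by apply: H; left.
by apply: IH => g Hg; apply: H; right.
Qed.
Lemma In_mem (T : eqType) (x : T) s : x \in s -> List.In x s.
Proof. by elim: s => //= a s IH; rewrite inE => /orP[/eqP->|/IH]; [left|right]. Qed.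

Lemma bigM_subst T n k (a : {ffun 'I_n -> 'I_k}) (F : T -> car L n) (G : seq T) :
  subst a (\big[@meet L n/one]_(x <- G) F x) = \big[@meet L k/one]_(x <- G) subst a (F x).
Proof. by elim: G => [|g G IH]; rewrite ?big_nil ?subst1 // !big_cons substM IH. Qed.
Lemma bigJ_subst T n k (a : {ffun 'I_n -> 'I_k}) (F : T -> car L n) (G : seq T) :
  subst a (\big[@join L n/zero]_(x <- G) F x) = \big[@join L k/zero]_(x <- G) subst a (F x).
Proof. by elim: G => [|g G IH]; rewrite ?big_nil ?subst0 // !big_cons substJ IH. Qed.
Lemma mem_In (T : eqType) (x : T) s : List.In x s -> x \in s.
Proof. by elim: s => //= a s IH [->|/IH]; rewrite inE ?eqxx // => ->; rewrite orbT. Qed.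

Section Main.
Hypothesis H10 : ~ le (one : car L 1) zero.

Local Notation Pair := (boolp.classicType {n : nat & {rs : car L n * car L n | ~ le rs.1 rs.2}}).
Local Notation V := (boolp.classicType {p : Pair & 'I_(projT1 p)}).
Definition pd : Pair := existT _ 1 (exist _ (one, zero) H10).
Definition v0 : V := existT (fun p : Pair => 'I_(projT1 p)) pd ord0.
Definition Lit := {n : nat & (car L n * {ffun 'I_n -> V})%type}.
Definition lrel (l : Lit) : car L (projT1 l) := (projT2 l).1.
Definition ltup (l : Lit) : {ffun 'I_(projT1 l) -> V} := (projT2 l).2.
Definition mkl n (r : car L n) (x : {ffun 'I_n -> V}) : Lit := existT _ n (r, x).
Definition liftc (c : seq V) n (x : {ffun 'I_n -> V}) : {ffun 'I_n -> 'I_(size c).+1} :=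
  [ffun i => inord (index (x i) c)].
Definition elem c (l : Lit) : car L (size c).+1 := subst (liftc c (ltup l)) (lrel l).
Definition covers (c : seq V) (G : seq Lit) := forall g, List.In g G -> forall i, ltup g i \in c.
Definition BM c (G : seq Lit) := \big[@meet L _/one]_(g <- G) elem c g.
Definition BJ c (G : seq Lit) := \big[@join L _/zero]_(g <- G) elem c g.
Definition ent (G D : seq Lit) := exists c, covers c G /\ covers c D /\ le (BM c G) (BJ c D).

Definition iota_ (c1 c : seq V) : {ffun 'I_(size c1).+1 -> 'I_(size c).+1} :=
  [ffun j : 'I_(size c1).+1 => inord (index (nth v0 c1 j) c)].

Lemma lift_transfer c1 c n (x : {ffun 'I_n -> V}) :
  (forall i, x i \in c1) ->
  compf (iota_ c1 c) (liftc c1 x) = liftc c x.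
Proof.
move=> Hx; apply/ffunP => i; rewrite !ffunE.
by rewrite inordK ?nth_index // ltnS index_size.
Qed.

Lemma BM_transfer c1 c G : covers c1 G ->
  subst (iota_ c1 c) (BM c1 G) = BM c G.
Proof.
rewrite /BM bigM_subst //; elim: G => [|g G IH] H; rewrite ?big_nil // !big_cons.
rewrite IH; last by move=> h Hh; apply: H; right.
by rewrite /elem -substC // lift_transfer //; apply: H; left.
Qed.
Lemma BJ_transfer c1 c G : covers c1 G ->
  subst (iota_ c1 c) (BJ c1 G) = BJ c G.
Proof.
rewrite /BJ bigJ_subst //; elim: G => [|g G IH] H; rewrite ?big_nil // !big_cons.
rewrite IH; last by move=> h Hh; apply: H; right.
by rewrite /elem -substC // lift_transfer //; apply: H; left.
Qed.

Lemma le_transfer c1 c G D : covers c1 G -> covers c1 D ->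
  le (BM c1 G) (BJ c1 D) -> le (BM c G) (BJ c D).
Proof.
move=> HG HD H; rewrite -(BM_transfer c HG) -(BJ_transfer c HD).
exact: subst_le.
Qed.

Definition ctx (G : seq Lit) : seq V := flatten [seq codom (ltup l) | l <- G].
Lemma ctx_cov G : covers (ctx G) G.
Proof.
elim: G => //= a G IH g [->|Hg] i; rewrite mem_cat; first by rewrite codom_f.
by rewrite IH ?orbT.
Qed.
Lemma covers_sub (c c' : seq V) G : covers c G -> (forall v, v \in c -> v \in c') -> covers c' G.
Proof. by move=> H Hs g Hg i; apply: Hs; apply: H. Qed.
Lemma covers_app c G D : covers c G -> covers c D -> covers c (G ++ D).
Proof. by move=> H1 H2 g Hg; case: (List.in_app_or _ _ _ Hg) => ?; [apply: H1|apply: H2]. Qed.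
Lemma covers_appl c G D : covers c (G ++ D) -> covers c G.
Proof. by move=> H g Hg; apply: H; apply: List.in_or_app; left. Qed.
Lemma covers_appr c G D : covers c (G ++ D) -> covers c D.
Proof. by move=> H g Hg; apply: H; apply: List.in_or_app; right. Qed.

Lemma ent_weak G D G' D' : (forall g, List.In g G -> List.In g G') ->
  (forall d, List.In d D -> List.In d D') -> ent G D -> ent G' D'.
Proof.
move=> HG HD [c [cG [cD H]]].
pose c' := c ++ ctx (G' ++ D').
have sub : forall v, v \in c -> v \in c' by move=> v Hv; rewrite mem_cat Hv.
have cov : covers c' (G' ++ D').
  by apply: (@covers_sub (ctx (G'++D')) c' (G'++D') (@ctx_cov (G'++D'))) => v Hv; rewrite mem_cat Hv orbT.
exists c'; split; first exact: covers_appl cov.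
split; first exact: covers_appr cov.
have H' := le_transfer c' cG cD H.
apply: le_trans (le_trans _ H') _.
  by apply: bigM_glb => g Hg; apply: bigM_lb; apply: HG.
by apply: bigJ_lub => g Hg; apply: bigJ_ub; apply: HD.
Qed.

Lemma ent_cut l G1 D1 G2 D2 : ent (l :: G1) D1 -> ent G2 (l :: D2) ->
  ent (G1 ++ G2) (D1 ++ D2).
Proof.
move=> [c1 [cG1 [cD1 H1]]] [c2 [cG2 [cD2 H2]]].
pose c := c1 ++ c2.
have s1 : forall v, v \in c1 -> v \in c by move=> v Hv; rewrite mem_cat Hv.
have s2 : forall v, v \in c2 -> v \in c by move=> v Hv; rewrite mem_cat Hv orbT.
have {}H1 := le_transfer c cG1 cD1 H1.
have {}H2 := le_transfer c cG2 cD2 H2.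
exists c; split.
  apply: covers_app; first by move=> g Hg; apply: (covers_sub cG1 s1); right.
  exact: covers_sub cG2 s2.
split.
  apply: covers_app; first exact: covers_sub cD1 s1.
  by move=> g Hg; apply: (covers_sub cD2 s2); right.
move: H1 H2; rewrite /BM /BJ !big_cons => H1 H2.
have a1 : le (\big[@meet L _/one]_(g <- G1 ++ G2) elem c g) (\big[@meet L _/one]_(g <- G1) elem c g).
  by apply: bigM_glb => g Hg; apply: bigM_lb; apply: List.in_or_app; left.
have a2 : le (\big[@meet L _/one]_(g <- G1 ++ G2) elem c g) (\big[@meet L _/one]_(g <- G2) elem c g).
  by apply: bigM_glb => g Hg; apply: bigM_lb; apply: List.in_or_app; right.
have d1 : le (\big[@join L _/zero]_(g <- D1) elem c g) (\big[@join L _/zero]_(g <- D1 ++ D2) elem c g).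
  by apply: bigJ_lub => g Hg; apply: bigJ_ub; apply: List.in_or_app; left.
have d2 : le (\big[@join L _/zero]_(g <- D2) elem c g) (\big[@join L _/zero]_(g <- D1 ++ D2) elem c g).
  by apply: bigJ_lub => g Hg; apply: bigJ_ub; apply: List.in_or_app; right.
apply: (le_cut (l := elem c l)).
  apply: le_trans d1; apply: le_trans H1; rewrite meetC.
  by apply: le_meet2 => //; apply: le_refl.
apply: le_trans (le_trans a2 H2) _.
by apply: le_join2 => //; apply: le_refl.
Qed.

Lemma ent_ctx G D : le (BM (ctx (G ++ D)) G) (BJ (ctx (G ++ D)) D) -> ent G D.
Proof.
move=> H; exists (ctx (G ++ D)); split; last split => //.
  exact: covers_appl (@ctx_cov (G ++ D)).
exact: covers_appr (@ctx_cov (G ++ D)).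
Qed.

Definition xp (p : Pair) : {ffun 'I_(projT1 p) -> V} :=
  [ffun i => (existT (fun p : Pair => 'I_(projT1 p)) p i : V)].
Definition lr (p : Pair) : Lit := mkl (sval (projT2 p)).1 (xp p).
Definition ls (p : Pair) : Lit := mkl (sval (projT2 p)).2 (xp p).

Lemma map_ex (A B : Type) (f : A -> B) (G : seq B) :
  (forall g, List.In g G -> exists a, g = f a) -> exists P, G = map f P.
Proof.
elim: G => [|g G IH] H; first by exists [::].
have [a ->] := H g (or_introl erefl).
have [P ->] : exists P, G = map f P by apply: IH => h Hh; apply: H; right.
by exists (a :: P).
Qed.

Lemma base G D : (forall g, List.In g G -> exists p, g = lr p) ->
  (forall d, List.In d D -> exists p, d = ls p) -> ~ ent G D.
Proof.
move=> /map_ex [PG ->] /map_ex [PD ->] [c [cG [cD H]]].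
pose ps := undup (pd :: PG ++ PD).
pose m := size ps.
pose k := fun i : 'I_m => projT1 (nth pd ps i).
pose rr := fun i : 'I_m => (sval (projT2 (nth pd ps i))).1 : car L (k i).
pose ss := fun i : 'I_m => (sval (projT2 (nth pd ps i))).2 : car L (k i).
have Hpd : pd \in ps by rewrite mem_undup inE eqxx.
have Hi0 : index pd ps < m by rewrite index_mem.
have Hk0 : 0 < k (Ordinal Hi0) by rewrite /k /= nth_index.
pose d := pcyl k (Ordinal Hi0) (Ordinal Hk0).
pose sig := [ffun j : 'I_(size c).+1 =>
  insubd d (\sum_(j' < m | j' < index (projT1 (nth v0 c j)) ps) k j' + projT2 (nth v0 c j))].
have key : forall i : 'I_m, (forall l, xp (nth pd ps i) l \in c) ->
    compf sig (liftc c (xp (nth pd ps i))) = pcyl k i.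
  move=> i Hc; apply/ffunP => l; apply: val_inj; rewrite !ffunE /=.
  have Hm := Hc l; rewrite ffunE in Hm.
  rewrite inordK ?ltnS ?index_size // nth_index //= index_uniq ?undup_uniq //.
  rewrite val_insubd addnC.
  have := @pcyl_subproof m k i l; rewrite /poff => ->.
  by [].
have key2 : forall q, q \in ps -> (forall l, xp q l \in c) -> exists i : 'I_m,
    subst sig (elem c (lr q)) = subst (pcyl k i) (rr i) /\
    subst sig (elem c (ls q)) = subst (pcyl k i) (ss i).
  move=> q Hq Hc.
  have Hi : index q ps < m by rewrite index_mem.
  exists (Ordinal Hi); rewrite /elem -!substC.
  have E : nth pd ps (Ordinal Hi) = q by rewrite /= nth_index.
  move: (Ordinal Hi) E => i E; subst q.
  by rewrite key.
have inps : forall q, List.In q PG \/ List.In q PD -> q \in ps.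
  move=> q Hq; rewrite mem_undup inE mem_cat; apply/orP; right.
  by case: Hq => /mem_In ->; rewrite ?orbT.
have [i Hi] : exists i, le (rr i) (ss i).
  apply: ax0; apply: le_trans (le_trans _ (subst_le sig H)) _.
    rewrite /BM bigM_subst; apply: bigM_glb => g.
    case/List.in_map_iff => q [<- Hq].
    have Hc : forall l, xp q l \in c.
      by move=> l; apply: (cG (lr q)); apply: List.in_map.
    have [i [-> _]] := key2 q (inps q (or_introl Hq)) Hc.
    by apply: (@bigM_lb _ _ (fun i => subst (pcyl k i) (rr i))); apply: In_mem; rewrite mem_index_enum.
  rewrite /BJ bigJ_subst; apply: bigJ_lub => g.
  case/List.in_map_iff => q [<- Hq].
  have Hc : forall l, xp q l \in c.
    by move=> l; apply: (cD (ls q)); apply: List.in_map.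
  have [i [_ ->]] := key2 q (inps q (or_intror Hq)) Hc.
  by apply: (@bigJ_ub _ _ (fun i => subst (pcyl k i) (ss i))); apply: In_mem; rewrite mem_index_enum.
exact: (proj2_sig (projT2 (nth pd ps i))).
Qed.

Definition consis (S : set (bool * Lit)) := forall G D,
  (forall g, List.In g G -> S (true, g)) -> (forall d, List.In d D -> S (false, d)) -> ~ ent G D.
Definition initS (e : bool * Lit) := exists p, e = (true, lr p) \/ e = (false, ls p).
Definition addS (S : set (bool * Lit)) e := fun e' => S e' \/ e' = e.

Lemma consis_init : consis initS.
Proof.
move=> G D HG HD; apply: base.
  by move=> g /HG [p [[->]|]] //; exists p.
by move=> g /HD [p [|[->]]] //; exists p.
Qed.

Lemma cons_sub (S S' : set (bool * Lit)) : (forall e, S e -> S' e) -> consis S' -> consis S.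
Proof. by move=> H HS G D HG HD; apply: HS => ? ?; apply: H; [apply: HG|apply: HD]. Qed.

Lemma chain_list (F : set (set (bool * Lit))) (E : seq (bool * Lit)) :
  total_on F subset ->
  (forall e, List.In e E -> (exists2 X, F X & X e) \/ initS e) ->
  exists X, (F X \/ forall e, ~ X e) /\ forall e, List.In e E -> X e \/ initS e.
Proof.
move=> tot; elim: E => [|a E IH] H.
  by exists (fun _ => False); split; [right => e []|move=> e []].
have [X [HX HE]] : exists X, (F X \/ forall e, ~ X e) /\ forall e, List.In e E -> X e \/ initS e.
  by apply: IH => e He; apply: H; right.
case: (H a (or_introl erefl)) => [[Y FY Ya]|Ia]; last first.
  by exists X; split => // e [<-|/HE]; [right|].
case: HX => [FX|X0].
  case: (tot X Y FX FY) => sub.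
    exists Y; split; first by left.
    by move=> e [<-|/HE [/sub|]]; [left| left|right].
  exists X; split; first by left.
  by move=> e [<-|/HE]; [left; apply: sub|].
exists Y; split; first by left.
by move=> e [<-|/HE [/X0 []|]]; [left|right].
Qed.

Lemma maxcons : exists S, consis S /\ (forall e, initS e -> S e) /\
  (forall e, consis (addS S e) -> S e).
Proof.
have [F FP tot|A [PA maxA]] := @Zorn_bigcup _ (fun A => consis (fun e => A e \/ initS e)); last first.
  exists (fun e => A e \/ initS e); split => //; split; first by move=> e; right.
  move=> e He; case: (pselect (A e)) => Ae; first by left.
  exfalso; apply: (maxA (fun e' => A e' \/ e' = e)).
    split; first by move=> ? ?; left.
    by move/(_ e (or_intror erefl)).
  apply: cons_sub He => e' [[]|]; rewrite /addS; tauto.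
move=> G D HG HD Hent.
pose E := map (pair true) G ++ map (pair false) D.
have [e He|X [HX HE]] := @chain_list F E tot.
  case: (List.in_app_or _ _ _ He) => H';
    have [x [<- Hx]] := proj1 (List.in_map_iff _ _ _) H'.
    by case: (HG x Hx) => [[Y FY Yx]|]; [left; exists Y|right].
  by case: (HD x Hx) => [[Y FY Yx]|]; [left; exists Y|right].
have HXS : consis (fun e => X e \/ initS e).
  case: HX => [/FP //|X0]; apply: cons_sub consis_init.
  by move=> e [/X0|].
apply: (HXS G D _ _ Hent) => g Hg; apply: HE; apply: List.in_or_app;
  [left|right]; exact: List.in_map.
Qed.

Lemma split_list (Q : Lit -> Prop) l (G : seq Lit) : (forall g, List.In g G -> Q g \/ g = l) ->
  exists G', (forall g, List.In g G' -> Q g) /\ (forall g, List.In g G -> List.In g (l :: G')).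
Proof.
elim: G => [|a G IH] H; first by exists [::].
have [G' [H1 H2]] : exists G', (forall g, List.In g G' -> Q g) /\ (forall g, List.In g G -> List.In g (l :: G')).
  by apply: IH => g Hg; apply: H; right.
case: (H a (or_introl erefl)) => [Qa|->].
  exists (a :: G'); split; first by move=> g [<-|/H1].
  by move=> g [<-|/H2 [->|?]]; [right; left|left|right; right].
exists G'; split => // g [<-|/H2]; [left|] => //.
Qed.

Lemma ent11 n k (r : car L n) (s : car L k) x y :
  (forall c, le (subst (liftc c x) r) (subst (liftc c y) s)) -> ent [:: mkl r x] [:: mkl s y].
Proof. by move=> H; apply: ent_ctx; rewrite /BM /BJ !big_cons !big_nil meet1 join0; apply: H. Qed.
Lemma ent12 n (r s1 s2 : car L n) x :
  (forall c, le (subst (liftc c x) r) (join (subst (liftc c x) s1) (subst (liftc c x) s2))) ->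
  ent [:: mkl r x] [:: mkl s1 x; mkl s2 x].
Proof. by move=> H; apply: ent_ctx; rewrite /BM /BJ !big_cons !big_nil meet1 join0; apply: H. Qed.
Lemma ent21 n (r1 r2 s : car L n) x :
  (forall c, le (meet (subst (liftc c x) r1) (subst (liftc c x) r2)) (subst (liftc c x) s)) ->
  ent [:: mkl r1 x; mkl r2 x] [:: mkl s x].
Proof. by move=> H; apply: ent_ctx; rewrite /BM /BJ !big_cons !big_nil meet1 join0; apply: H. Qed.
Lemma ent10 n (r : car L n) x :
  (forall c, le (subst (liftc c x) r) zero) -> ent [:: mkl r x] [::].
Proof. by move=> H; apply: ent_ctx; rewrite /BM /BJ !big_cons !big_nil meet1; apply: H. Qed.
Lemma ent01 n (r : car L n) x :
  (forall c, le one (subst (liftc c x) r)) -> ent [::] [:: mkl r x].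
Proof. by move=> H; apply: ent_ctx; rewrite /BM /BJ !big_cons !big_nil join0; apply: H. Qed.

Lemma lift_tuple c n k (a : {ffun 'I_n -> 'I_k}) (x : {ffun 'I_k -> V}) :
  liftc c (Defs.tuple_of a x) = compf (liftc c x) a.
Proof. by apply/ffunP => i; rewrite !ffunE. Qed.

Lemma tuple_snoc W n (x : {ffun 'I_n -> W}) y : Defs.tuple_of (cylf n) (snoc x y) = x.
Proof.
apply/ffunP => i; rewrite !ffunE.
have -> : widen_ord (leqnSn n) i = lift ord_max i.
  by apply: val_inj; rewrite /= /bump leqNgt ltn_ord.
by rewrite liftK.
Qed.

Section Model.
Variable S : set (bool * Lit).
Hypothesis HS : consis S.
Hypothesis Hmax : forall e, consis (addS S e) -> S e.

Lemma complete l : S (true, l) \/ S (false, l).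
Proof.
case: (pselect (consis (addS S (true, l)))) => [/Hmax|H1]; [by left|right].
apply: Hmax => G2 D2 HG2 HD2 Hent2; apply: H1 => G1 D1 HG1 HD1 Hent1.
have [G1' [HG1' sG1]] := @split_list (fun g => S (true, g)) l G1
  (fun g Hg => match HG1 g Hg with or_introl h => or_introl h
                | or_intror h => or_intror (f_equal snd h) end).
have [D2' [HD2' sD2]] := @split_list (fun g => S (false, g)) l D2
  (fun g Hg => match HD2 g Hg with or_introl h => or_introl h
                | or_intror h => or_intror (f_equal snd h) end).
have e1 : ent (l :: G1') D1 by apply: ent_weak Hent1.
have e2 : ent G2 (l :: D2') by apply: ent_weak Hent2.
apply: HS (ent_cut e1 e2).
  move=> g Hg; case: (List.in_app_or _ _ _ Hg) => [/HG1'//|/HG2 [//|[]]] //.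
move=> g Hg; case: (List.in_app_or _ _ _ Hg) => [/HD1 [//|[]]|/HD2'] //.
Qed.

Lemma ent_true G D : ent G D -> (forall g, List.In g G -> S (true, g)) ->
  exists2 d, List.In d D & S (true, d).
Proof.
move=> He HG; case: (pselect (exists2 d, List.In d D & S (true, d))) => // Hn.
exfalso; apply: (HS HG _ He) => d Hd.
by case: (complete d) => // Hd'; exfalso; apply: Hn; exists d.
Qed.

Lemma Tt_closed G l : ent G [:: l] -> (forall g, List.In g G -> S (true, g)) -> S (true, l).
Proof. by move=> He /(ent_true He) [d [<-|[]]]. Qed.

Lemma Tt1 l l' : ent [:: l] [:: l'] -> S (true, l) -> S (true, l').
Proof. by move=> He Hl; apply: (Tt_closed He) => g [<-|[]]. Qed.

Definition phi n (r : car L n) (x : {ffun 'I_n -> V}) : Prop := S (true, mkl r x).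

Lemma phi_am : almost_morphism phi.
Proof.
split.
  move=> n k a r; apply: funext => x; apply: propext; rewrite /phi; split; apply: Tt1;
  by apply: ent11 => c; rewrite lift_tuple substC; apply: le_refl.
split.
  move=> n; apply: funext => x; apply: propext; split => // H.
  have E : ent [:: mkl zero x] [::] by apply: ent10 => c; rewrite subst0; apply: le_refl.
  have HG : forall g, List.In g [:: mkl zero x] -> S (true, g) by move=> g [<-|[]].
  by case: (ent_true E HG).
split.
  move=> n; apply: funext => x; apply: propext; split => // _.
  have E : ent [::] [:: mkl one x] by apply: ent01 => c; rewrite subst1; apply: le_refl.
  exact: (Tt_closed E).
split.
  move=> n r s; apply: funext => x; apply: propext; split => H.
    have E : ent [:: mkl (join r s) x] [:: mkl r x; mkl s x].
      by apply: ent12 => c; rewrite substJ; apply: le_refl.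
    have HG : forall g, List.In g [:: mkl (join r s) x] -> S (true, g) by move=> g [<-|[]].
    by case: (ent_true E HG) => d [<-|[<-|[]]]; [left|right].
  case: H => H; apply: (Tt1 _ H); apply: ent11 => c; rewrite substJ;
    [apply: le_joinl|apply: le_joinr].
split.
  move=> n r s; apply: funext => x; apply: propext; split => H.
    by split; apply: (Tt1 _ H); apply: ent11 => c; rewrite substM;
      [apply: le_meetl|apply: le_meetr].
  case: H => H1 H2.
  have E : ent [:: mkl r x; mkl s x] [:: mkl (meet r s) x].
    by apply: ent21 => c; rewrite substM; apply: le_refl.
  by apply: (Tt_closed E) => g [<-|[<-|[]]].
move=> n r x y H.
have H' : phi (subst (cylf n) (ex r)) (snoc x y).
  by apply: (Tt1 _ H); apply: ent11 => c; apply: subst_le; apply: exle.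
have E : ent [:: mkl (subst (cylf n) (ex r)) (snoc x y)]
             [:: mkl (ex r) (Defs.tuple_of (cylf n) (snoc x y))].
  by apply: ent11 => c; rewrite lift_tuple substC; apply: le_refl.
by have := Tt1 E H'; rewrite tuple_snoc.
Qed.

Hypothesis Hinit : forall e, initS e -> S e.

Lemma phi_sep n (r s : car L n) : ~ le r s -> phi r <> phi s.
Proof.
move=> H E.
pose p : Pair := existT _ n (exist _ (r, s) H).
have H1 : S (true, lr p) by apply: Hinit; exists p; left.
have H2 : S (false, ls p) by apply: Hinit; exists p; right.
have H3 : S (true, ls p).
  by move: H1; rewrite /lr /ls /= -/(phi r (xp p)) E.
apply: (HS (G := [:: ls p]) (D := [:: ls p])).
- by move=> g [<-|[]].
- by move=> g [<-|[]].
by apply: ent11 => c; apply: le_refl.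
Qed.

Lemma phi_inj n : injective (@phi n).
Proof.
move=> r s E; apply: le_anti.
  by case: (pselect (le r s)) => // /phi_sep.
by case: (pselect (le s r)) => // /phi_sep; rewrite E.
Qed.

End Model.

Lemma nondeg : exists (W : Type) (phi : forall n, car L n -> ({ffun 'I_n -> W} -> Prop)),
    almost_morphism phi /\ (forall n, injective (phi n)).
Proof.
have [S [HS [Hi Hm]]] := maxcons.
exists V, (phi S); split; first exact: phi_am.
by move=> n; apply: phi_inj.
Qed.

End Main.
Lemma one_ne_zero : (one : car L 0) <> zero.
Proof.
move=> E.
have [i _] : exists i : 'I_0, le (one : car L 0) zero.
  apply: (@ax0 0 (fun _ => 0) (fun _ => one) (fun _ => zero)).
  rewrite (big_ord0 one (@meet L _)) (big_ord0 zero (@join L _)) big_ord0.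
  by rewrite /le -E meetxx.
by case: i.
Qed.

Lemma zo (x : car L 0) : x = one \/ x = zero.
Proof.
pose k := fun _ : 'I_2 => 0.
pose r := fun i : 'I_2 => if i == ord0 then (one : car L 0) else x.
pose s := fun i : 'I_2 => if i == ord0 then x else (zero : car L 0).
have pe : forall i, pcyl k i = pcyl k ord0 by move=> i; apply/ffunP => -[].
have [i Hi] : exists i : 'I_2, le (r i) (s i).
  apply: ax0.
  rewrite !(@big_ord_recl _ one (@meet L _)) !(@big_ord_recl _ zero (@join L _)).
  rewrite (big_ord0 one (@meet L _)) (big_ord0 zero (@join L _)) !pe /r /s /= subst1 subst0.
  apply: le_trans (le_meetr _ _) _; apply: le_trans (le_meetl _ _) _.
  exact: le_joinl.
case: i Hi => -[|[|//]] Hi; rewrite /r /s /= => H.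
  by left; apply: le_anti => //; apply: le_one.
by right; apply: le_anti => //; apply: le_zero.
Qed.

Section Deg.
Hypothesis Hdeg : le (one : car L 1) zero.

Lemma triv n (x y : car L n.+1) : x = y.
Proof.
have E : (one : car L n.+1) = zero.
  pose a : {ffun 'I_1 -> 'I_n.+1} := [ffun _ => ord0].
  have := subst_le a Hdeg; rewrite subst1 subst0 /le meetC meet0 => ->.
  by [].
have Z : forall z : car L n.+1, z = zero.
  by move=> z; rewrite -(meet1 z) E meetC meet0.
by rewrite (Z x) (Z y).
Qed.

Definition phid n (r : car L n) (x : {ffun 'I_n -> Empty_set}) : Prop := r = one.

Lemma joinone (x : car L 0) : join one x = one.
Proof. by apply: le_anti; [apply: le_one|apply: le_joinl]. Qed.

Lemma phid_am : almost_morphism phid.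
Proof.
have Ne := one_ne_zero.
have t : (one : car L 0) = one by [].
split.
  move=> n [|k] a r; apply: funext => x; last by case: (x ord0).
  case: n a r => [|n] a r; last by case: (a ord0).
  have -> : a = idf 0 by apply/ffunP => -[].
  by rewrite /phid substI.
split.
  move=> [|n]; apply: funext => x; last by case: (x ord0).
  by apply: propext; rewrite /phid; split => // /esym.
split.
  by move=> n; apply: funext => x; apply: propext.
split.
  move=> [|n] r s; apply: funext => x; last by case: (x ord0).
  apply: propext; rewrite /phid.
  case: (zo r) => ->; case: (zo s) => ->;
    rewrite ?joinone ?join0 ?[join _ one]joinC ?joinone; split; tauto.
split.
  move=> [|n] r s; apply: funext => x; last by case: (x ord0).
  apply: propext; rewrite /phid.
  case: (zo r) => ->; case: (zo s) => ->;
    rewrite ?meet1 ?meet0 ?[meet one _]meetC ?meet1 ?[meet _ zero]meetC ?meet0; split; tauto.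
by move=> n r x [].
Qed.

Lemma phid_inj n : injective (@phid n).
Proof.
case: n => [|n] r s E; last exact: triv.
have x0 : {ffun 'I_0 -> Empty_set} by apply: finfun => -[].
have := congr1 (fun f => f x0) E; rewrite /phid => E'.
case: (zo r) => Hr; case: (zo s) => Hs; rewrite ?Hr ?Hs //.
  exfalso; apply: one_ne_zero; move: E'; rewrite Hr Hs => E'.
  by have : (zero : car L 0) = one by rewrite -E'.
exfalso; apply: one_ne_zero; move: E'; rewrite Hr Hs => E'.
by have : (zero : car L 0) = one by rewrite E'.
Qed.

End Deg.
End Lat.

Theorem lemma4p10 (L : PEAlg) (HL : PEaxioms L) :
  exists (W : Type) (phi : forall n, car L n -> ({ffun 'I_n -> W} -> Prop)),
    almost_morphism phi /\ (forall n, injective (phi n)).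
Proof.
case: (pselect (le (Defs.one : car L 1) Defs.zero)) => H.
  exists Empty_set, (@phid L); split; first exact: (phid_am HL).
  by move=> n; apply: (phid_inj HL H).
exact: (nondeg HL H).
Qed.
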